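(* Let $S=(x_1,x_2,\dots,x_N)$ be a finite sequence of real numbers. For each term $x_j$ let $i(x_j)$ be the length of the longest strictly increasing subsequence of $S$ containing the term $x_j$, and let $d(x_j)$ be the length of the longest non-increasing subsequence of $S$ containing the term $x_j$ (if the terms are pairwise distinct, this is the longest decreasing subsequence containing $x_j$). Then \[ \sum_{j=1}^N\frac{1}{i(x_j)\,d(x_j)}\le 1. \]
   Context: Subsequences are taken by positions: a subsequence is $(x_{j_1},\dots,x_{j_m})$ with $j_1<\dots<j_m$, and it contains the term $x_j$ if $j\in\{j_1,\dots,j_m\}$. *)

(* Defs.v *)
From mathcomp Require Import all_boot all_order all_algebra.
From mathcomp Require Import reals.
Set Implicit Arguments. Unset Strict Implicit. Unset Printing Implicit Defensive.
Import Order.TTheory GRing.Theory Num.Theory.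
Local Open Scope ring_scope.

(* A sequence S = (x_1,...,x_N) is a seq R; positions are 'I_(size S) (0-based),
   x_j = nth 0 S j.  A subsequence is given by its set of positions A. *)

Definition incr_pos (R : realType) (S : seq R) (A : {set 'I_(size S)}) : bool :=
  [forall p in A, forall q in A, (p < q)%N ==> (nth 0 S p < nth 0 S q)].

Definition nonincr_pos (R : realType) (S : seq R) (A : {set 'I_(size S)}) : bool :=
  [forall p in A, forall q in A, (p < q)%N ==> (nth 0 S q <= nth 0 S p)].

Definition ilen (R : realType) (S : seq R) (j : 'I_(size S)) : nat :=
  \max_(A : {set 'I_(size S)} | (j \in A) && incr_pos A) #|A|.

Definition dlen (R : realType) (S : seq R) (j : 'I_(size S)) : nat :=
  \max_(A : {set 'I_(size S)} | (j \in A) && nonincr_pos A) #|A|.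

(* Main.v *)
Require Import Defs.
From mathcomp Require Import all_boot all_order all_algebra.
From mathcomp Require Import reals.
Import Order.TTheory GRing.Theory Num.Theory.
From mathcomp Require Import zify ring.
Set Implicit Arguments. Unset Strict Implicit. Unset Printing Implicit Defensive.

Section Gen.
Variable n : nat.
Variable r : rel 'I_n.
Hypothesis rtr : forall a b c, r a b -> r b c -> r a c.

Definition chainb (A : {set 'I_n}) : bool :=
  [forall p in A, forall q in A, (p < q)%N ==> r p q].

Definition MM (j : 'I_n) : nat := \max_(A : {set 'I_n} | (j \in A) && chainb A) #|A|.
Definition LL (j : 'I_n) : nat :=
  \max_(A : {set 'I_n} | [&& j \in A, chainb A & [forall p in A, (p <= j)%N]]) #|A|.

Lemma chainP (A : {set 'I_n}) : reflect (forall p q : 'I_n, p \in A -> q \in A -> (p < q)%N -> r p q) (chainb A).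
Proof.
apply: (iffP forall_inP) => [H p q pA qA pq | H p pA].
  by move/forall_inP: (H p pA) => /(_ q qA) /implyP; apply.
apply/forall_inP => q qA; apply/implyP; exact: H.
Qed.

Lemma chain1 (j : 'I_n) : chainb [set j].
Proof. by apply/chainP => p q; rewrite !inE => /eqP -> /eqP ->; rewrite ltnn. Qed.

Lemma chain_sub (A B : {set 'I_n}) : A \subset B -> chainb B -> chainb A.
Proof.
move=> /subsetP sAB /chainP H; apply/chainP => p q pA qA; apply: H; exact: sAB.
Qed.

Lemma chainU (A B : {set 'I_n}) : chainb A -> chainb B ->
  (forall p q : 'I_n, p \in A -> q \in B -> (p < q)%N /\ r p q) -> chainb (A :|: B).
Proof.
move=> /chainP hA /chainP hB hAB; apply/chainP => p q; rewrite !inE.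
case/orP=> pA; case/orP=> qB pq.
- exact: hA.
- by case: (hAB p q pA qB).
- by case: (hAB q p qB pA) => qp; move: (ltn_trans qp pq); rewrite ltnn.
- exact: hB.
Qed.

Lemma max_attain (P : pred {set 'I_n}) (A0 : {set 'I_n}) : P A0 ->
  exists2 A, P A & \max_(A | P A) #|A| = #|A|.
Proof.
move=> PA0.
have : (0 < #|P|)%N by apply/card_gt0P; exists A0.
move=> h; case: (eq_bigmax_cond (fun A : {set 'I_n} => #|A|) h) => A PA e.
by exists A.
Qed.

Lemma LL_ge1 (j : 'I_n) : (1 <= LL j)%N.
Proof.
apply: (leq_trans _ (leq_bigmax_cond _ _)); last first.
  apply/and3P; split; [exact: set11 | exact: chain1 |].
  by apply/forall_inP => p; rewrite inE => /eqP ->.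
by rewrite cards1.
Qed.

Lemma LL_le_MM (j : 'I_n) : (LL j <= MM j)%N.
Proof.
apply/bigmax_leqP => A /and3P [jA cA _].
by apply: leq_bigmax_cond; rewrite jA cA.
Qed.

Lemma MM_le (j : 'I_n) : (MM j <= n)%N.
Proof.
apply/bigmax_leqP => A _; rewrite -[X in (_ <= X)%N]card_ord; exact: max_card.
Qed.

Lemma LL_attain (j : 'I_n) : exists2 A : {set 'I_n}, [&& j \in A, chainb A & [forall p in A, (p <= j)%N]]
   & LL j = #|A|.
Proof.
apply: max_attain; apply/and3P; split; [exact: set11 | exact: chain1 |].
by apply/forall_inP => p; rewrite inE => /eqP ->.
Qed.

Lemma MM_attain (j : 'I_n) : exists2 A : {set 'I_n}, (j \in A) && chainb A & MM j = #|A|.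
Proof. by apply: (@max_attain _ [set j]); rewrite set11 chain1. Qed.

Lemma below_rel (x y : 'I_n) (A : {set 'I_n}) : (x < y)%N -> r x y -> x \in A -> chainb A ->
  (forall p : 'I_n, p \in A -> (p <= x)%N) -> forall p : 'I_n, p \in A -> (p < y)%N /\ r p y.
Proof.
move=> xy rxy xA /chainP cA hA p pA; split; first exact: leq_ltn_trans (hA p pA) xy.
have := hA p pA; rewrite leq_eqVlt => /orP [/eqP e|px].
  by have -> : p = x by apply: val_inj.
by apply: rtr rxy; apply: cA.
Qed.

Lemma LL_step (x y : 'I_n) : (x < y)%N -> r x y -> (LL x < LL y)%N.
Proof.
move=> xy rxy; case: (LL_attain x) => A /and3P [xA cA /forall_inP hA] ->.
have yA : y \notin A by apply/negP => /hA; rewrite leqNgt xy.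
apply: (@leq_trans #|y |: A|); first by rewrite cardsU1 yA.
apply: leq_bigmax_cond; apply/and3P; split; first by rewrite !inE eqxx.
  rewrite setUC; apply: chainU => // [|p q pA]; first exact: chain1.
  by rewrite inE => /eqP ->; apply: (below_rel xy rxy xA cA).
apply/forall_inP => p; rewrite !inE => /orP [/eqP -> //| /hA px].
exact: ltnW (leq_ltn_trans px xy).
Qed.

Lemma MM_step (x y : 'I_n) : (x < y)%N -> r x y -> (LL x + MM y < MM x + LL y)%N.
Proof.
move=> xy rxy; case: (LL_attain x) => A /and3P [xA cA /forall_inP hA] eA.
case: (MM_attain y) => B /andP [yB cB] eB.
set E := [set q in B | (q <= y)%N].
set D := [set q in B | (y <= q)%N].
have hE : (#|E| <= LL y)%N.
  apply: leq_bigmax_cond; apply/and3P; split.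
  - by rewrite inE yB leqnn.
  - by apply: chain_sub cB; apply/subsetP => q; rewrite inE => /andP [].
  - by apply/forall_inP => q; rewrite inE => /andP [].
have hBED : #|E| + #|D| = #|B| + 1.
  have -> : #|B| + 1 = #|E :|: D| + #|E :&: D|.
    have -> : E :|: D = B.
      apply/setP => q; rewrite !inE.
      case qB: (q \in B); rewrite ?orbF //=; exact: leq_total.
    have -> : E :&: D = [set y].
      apply/setP => q; rewrite !inE.
      apply/idP/idP.
        case/andP => /andP [qB qy] /andP [_ yq]; apply/eqP/val_inj/eqP; rewrite eqn_leq qy yq //.
      by move=> /eqP ->; rewrite yB leqnn.
    by rewrite cards1.
  by rewrite cardsUI.
have hAD : #|A :|: D| = #|A| + #|D|.
  rewrite -cardsUI; suff -> : A :&: D = set0 by rewrite cards0 addn0.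
  apply/setP => q; rewrite !inE; apply/negP => /and3P [/hA qx _ yq].
  by move: (leq_trans yq qx); rewrite leqNgt xy.
have hC : (#|A :|: D| <= MM x)%N.
  apply: leq_bigmax_cond; rewrite inE xA /=; apply: chainU => //.
    by apply: chain_sub cB; apply/subsetP => q; rewrite inE => /andP [].
  move=> p q pA; rewrite inE => /andP [qB yq].
  have [py rpy] := below_rel xy rxy xA cA hA pA.
  split; first exact: leq_trans py yq.
  move: yq; rewrite leq_eqVlt => /orP [/eqP e|yq].
    by have <- : y = q by apply: val_inj.
  by apply: rtr rpy _; move/chainP: cB; apply.
lia.
Qed.

Lemma key (x y : 'I_n) : (x < y)%N -> r x y -> (LL x * MM y <= (LL y - 1) * MM x)%N.
Proof.
move=> xy rxy; have h1 := LL_step xy rxy; have h2 := MM_step xy rxy.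
have h3 := LL_le_MM x.
move: (LL x) (MM x) (LL y) (MM y) h1 h2 h3 => p c h e h1 h2 h3.
have : (e <= c + h - p - 1)%N by lia.
move=> he; apply: (leq_trans (leq_mul (leqnn p) he)).
have : (p * (h - 1 - p) <= c * (h - 1 - p))%N by apply: leq_mul.
nia.
Qed.

End Gen.

Section Scale.
Variable n : nat.
Variable r : rel 'I_n.
Hypothesis rtr : forall a b c, r a b -> r b c -> r a c.
Variable K : nat.
Hypothesis Kpos : (0 < K)%N.
Hypothesis Kdiv : forall x, MM r x %| K.

Lemma sep (x y : 'I_n) : (x < y)%N -> r x y ->
  (LL r x * (K %/ MM r x) <= (LL r y - 1) * (K %/ MM r y))%N.
Proof.
move=> xy rxy; have hk := key rtr xy rxy.
have ex := divnK (Kdiv x); have ey := divnK (Kdiv y).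
rewrite -(leq_pmul2r Kpos).
have := leq_mul hk (leqnn ((K %/ MM r x) * (K %/ MM r y))).
move: ex ey.
move: K (LL r x) (MM r y) (LL r y - 1) (MM r x) (K %/ MM r x) (K %/ MM r y) => k p e h c a b ex ey H.
have -> : (p * a * k = p * e * (a * b))%N by rewrite -ey; nia.
have -> : (h * b * k = h * c * (a * b))%N by rewrite -ex; nia.
exact: H.
Qed.
End Scale.

Lemma count_int (K a b : nat) : (a <= b <= K)%N ->
  \sum_(t < K) ((a <= t) && (t < b) : nat) = (b - a)%N.
Proof.
suff H : forall K, \sum_(t < K) ((a <= t) && (t < b) : nat) = (minn b K - minn a K)%N.
  by move=> /andP [ab bK]; rewrite H; lia.
elim=> [|k IH]; first by rewrite big_ord0; lia.
rewrite big_ord_recr /= IH.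
case: (leqP a k) => ak; case: (ltnP k b) => kb /=; lia.
Qed.

Section Main.
Variable R : realType.
Variable S : seq R.
Local Notation n := (size S).
Definition r1 : rel 'I_n := fun p q => (nth 0 S p < nth 0 S q)%R.
Definition r2 : rel 'I_n := fun p q => (nth 0 S q <= nth 0 S p)%R.
Lemma r1tr : forall a b c, r1 a b -> r1 b c -> r1 a c.
Proof. move=> a b c; exact: lt_trans. Qed.
Lemma r2tr : forall a b c, r2 a b -> r2 b c -> r2 a c.
Proof. move=> a b c h1 h2; exact: le_trans h2 h1. Qed.

Lemma ilenE j : ilen j = MM r1 j. Proof. by []. Qed.
Lemma dlenE j : dlen j = MM r2 j. Proof. by []. Qed.

Definition K := n`!.
Lemma Kpos : (0 < K)%N. Proof. exact: fact_gt0. Qed.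
Lemma MM_ge1 (r : rel 'I_n) j : (0 < MM r j)%N.
Proof. exact: leq_trans (LL_ge1 r j) (LL_le_MM r j). Qed.
Lemma Kdiv (r : rel 'I_n) x : MM r x %| K.
Proof. by apply: dvdn_fact; rewrite MM_ge1 MM_le. Qed.

Definition al (r : rel 'I_n) x := (K %/ MM r x)%N.
Definition lo (r : rel 'I_n) x := ((LL r x - 1) * al r x)%N.
Definition hi (r : rel 'I_n) x := (LL r x * al r x)%N.
Definition inI (r : rel 'I_n) x t := (lo r x <= t) && (t < hi r x).

Lemma inI_count (r : rel 'I_n) x : \sum_(t < K) (inI r x t : nat) = al r x.
Proof.
rewrite /inI count_int; last first.
  apply/andP; split; first by rewrite /lo /hi; apply: leq_mul => //; apply: leq_subr.
  rewrite /hi /al; apply: leq_trans (leq_mul (LL_le_MM r x) (leqnn _)) _.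
  by rewrite mulnC divnK // Kdiv.
rewrite /hi /lo -mulnBl; have := LL_ge1 r x; move: (LL r x) => l l1.
have -> : (l - (l - 1) = 1)%N by lia. by rewrite mul1n.
Qed.

Lemma inI_disj (r : rel 'I_n) (rtr : forall a b c, r a b -> r b c -> r a c) (x y : 'I_n) (t : nat) :
  (x < y)%N -> r x y -> inI r x t -> inI r y t -> False.
Proof.
move=> xy rxy /andP [_ h1] /andP [h2 _].
have := sep rtr Kpos (Kdiv r) xy rxy; rewrite -/(al r x) -/(al r y) -/(hi r x) -/(lo r y).
lia.
Qed.

Definition f (x : 'I_n) (t u : nat) := inI r1 x t && inI r2 x u.

Lemma f_disj (x y : 'I_n) (t u : nat) : x != y -> f x t u -> f y t u -> False.
Proof.
wlog xy : x y / (x < y)%N.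
  move=> W neq; case: (ltngtP x y) => h.
  - exact: W.
  - by move=> A B; apply: (W y x) => //; rewrite eq_sym.
  - by move: neq => /eqP; case; apply: val_inj.
move=> _ /andP [a1 a2] /andP [b1 b2].
case: (ltP (nth 0%R S x) (nth 0%R S y)) => h.
  exact: (inI_disj r1tr xy h a1 b1).
exact: (inI_disj r2tr (xy : (x < y)%N) h a2 b2).
Qed.

Lemma f_le1 (t u : nat) : (\sum_(x < n) (f x t u : nat) <= 1)%N.
Proof.
case: (pickP (fun x => f x t u)) => [x0 fx0|none].
  rewrite (bigD1 x0) //= fx0 big1 // => y yx0.
  by case fy: (f y t u) => //; case: (f_disj yx0 fy fx0).
by rewrite big1 // => x _; rewrite none.
Qed.

Lemma sum_ab : (\sum_(x < n) al r1 x * al r2 x <= K * K)%N.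
Proof.
have -> : \sum_(x < n) al r1 x * al r2 x =
          \sum_(x < n) \sum_(t < K) \sum_(u < K) (f x t u : nat).
  apply: eq_bigr => x _; rewrite -(inI_count r1 x) -(inI_count r2 x) big_distrl /=.
  apply: eq_bigr => t _; rewrite big_distrr /=; apply: eq_bigr => u _.
  by rewrite /f mulnb.
rewrite exchange_big /=.
apply: (@leq_trans (\sum_(t < K) \sum_(u < K) 1)).
  apply: leq_sum => t _; rewrite exchange_big /=; apply: leq_sum => u _; exact: f_le1.
by rewrite !sum_nat_const !card_ord; lia.
Qed.

End Main.

Lemma al_MM (R : realType) (S : seq R) (r : rel 'I_(size S)) x : (al r x * MM r x = K S)%N.
Proof. exact: divnK (Kdiv r x). Qed.
Lemma al_gt0 (R : realType) (S : seq R) (r : rel 'I_(size S)) x : (0 < al r x)%N.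
Proof.
have := al_MM r x; have := Kpos S; move: (al r x) (K S) => a k.
by case: a => // kpos; rewrite mul0n => h; rewrite -h in kpos.
Qed.

From mathcomp Require Import ring.
Local Open Scope ring_scope.

Theorem corollary11 (R : realType) (S : seq R) :
  \sum_(j < size S) ((ilen j * dlen j)%:R)^-1 <= (1 : R).
Proof.
have E : forall j : 'I_(size S), ((ilen j * dlen j)%:R)^-1 =
   ((al (@r1 _ S) j * al (@r2 _ S) j)%:R / ((K S) * (K S))%:R :> R).
  move=> j; rewrite ilenE dlenE.
  have e1 := al_MM (@r1 _ S) j; have e2 := al_MM (@r2 _ S) j.
  have g1 := MM_ge1 (@r1 _ S) j; have g2 := MM_ge1 (@r2 _ S) j.
  have p1 := al_gt0 (@r1 _ S) j; have p2 := al_gt0 (@r2 _ S) j.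
  move: (K S) (al (@r1 _ S) j) (al (@r2 _ S) j) (MM (@r1 _ S) j) (MM (@r2 _ S) j)
     e1 e2 g1 g2 p1 p2 => k a b c d e1 e2 g1 g2 p1 p2.
  have -> : (k * k = (c * d) * (a * b))%N by rewrite -{1}e1 -e2; lia.
  rewrite !natrM; field.
  by rewrite !pnatr_eq0 -!lt0n p1 p2 g1 g2.
rewrite (eq_bigr _ (fun j _ => E j)) -mulr_suml -natr_sum.
have := sum_ab S; have := Kpos S.
move: (K S) (\sum_(i < size S) (al (@r1 _ S) i * al (@r2 _ S) i))%N => k s kp hs.
rewrite ler_pdivrMr; last by rewrite ltr0n muln_gt0 kp.
by rewrite mul1r ler_nat.
Qed.
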